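(* Let $n\ge 1$, let $a=(a_m)_{m\ge 0}$, $b=(b_m)_{m\ge0}$ be complex sequences with $b_0=0$ and $b_m\ne0$ for $m\ge1$, let $(p_m)_{m\ge0}$ be the monic polynomials with $p_{-1}=0$, $p_0=1$, $p_{m+1}(x)=(x-a_m)p_m(x)-b_mp_{m-1}(x)$ ($m\ge0$), and let $W:OY(\mathfrak{gl}_n,a,b)\to Y(\mathfrak{gl}_n)$ be the algebra isomorphism with $W(\tilde t^{(r)}_{ij})=t^{(r)}_{ij}+\sum_{l=0}^{r-1}p^r_lt^{(l)}_{ij}$, where $p_r(x)=\sum_{l=0}^rp^r_lx^l$. Define numbers $q^r_l$ ($0\le l\le r$, $q^r_r=1$) by $x^r=\sum_{l=0}^rq^r_l\,p_l(x)$ for all $r\ge0$. Then the inverse $W^{-1}:Y(\mathfrak{gl}_n)\to OY(\mathfrak{gl}_n,a,b)$ is given by $$t^{(r)}_{ij}\longmapsto \tilde t^{(r)}_{ij}+\sum_{l=0}^{r-1}q^r_l\,\tilde t^{(l)}_{ij},\qquad r\ge1,$$ and, on generating series, $W^{-1}(t_{ij}(u))=\frac{1}{2\pi i}\oint_{|z|=1}K^{-1}(z,\tfrac1u)\,\tilde T_{ij}(z)\frac{dz}{z}$ for $i,j=1,\dots,n$, with kernel $K^{-1}(z,u)=\sum_{l\ge0}u^l\sum_{m=0}^lq^l_mz^m$.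
   Context: $Y(\mathfrak{gl}_n)$ is the unital associative $\mathbb C$-algebra with generators $t^{(r)}_{ij}$ ($1\le i,j\le n$, $r\ge1$) and relations $[t^{(r+1)}_{ij},t^{(s)}_{kl}]-[t^{(r)}_{ij},t^{(s+1)}_{kl}]=t^{(r)}_{kj}t^{(s)}_{il}-t^{(s)}_{kj}t^{(r)}_{il}$ ($r,s\ge0$), $t^{(0)}_{ij}=\delta_{ij}$; $t_{ij}(u)=\sum_{r\ge0}t^{(r)}_{ij}u^{-r}$. $OY(\mathfrak{gl}_n,a,b)$ is the unital associative algebra with generators $\tilde t^{(r)}_{ij}$ ($r\ge1$) and relations $[\tilde t^{(r+1)}_{ij}+a_r\tilde t^{(r)}_{ij}+b_r\tilde t^{(r-1)}_{ij},\tilde t^{(s)}_{kl}]-[\tilde t^{(r)}_{ij},\tilde t^{(s+1)}_{kl}+a_s\tilde t^{(s)}_{kl}+b_s\tilde t^{(s-1)}_{kl}]=\tilde t^{(r)}_{kj}\tilde t^{(s)}_{il}-\tilde t^{(s)}_{kj}\tilde t^{(r)}_{il}$ ($r,s\ge0$), with $\tilde t^{(0)}_{ij}=\delta_{ij}$, $\tilde t^{(-1)}_{ij}=0$; $\tilde T_{ij}(u)=\delta_{ij}+\sum_{r\ge1}\tilde t^{(r)}_{ij}u^{-r}$. The contour integral $\frac{1}{2\pi i}\oint_{|z|=1}F(z)\frac{dz}{z}$ is understood formally as the coefficient of $z^0$ in $F(z)$, taken coefficientwise in $u^{-1}$. *)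

(* Defs.v *)
From HB Require Import structures.
From mathcomp Require Import all_boot all_order all_algebra.
From mathcomp Require Import complex Rstruct.
From Stdlib Require Import Rdefinitions.
Set Implicit Arguments. Unset Strict Implicit. Unset Printing Implicit Defensive.
Import Order.TTheory GRing.Theory Num.Theory.
Local Open Scope ring_scope.

Definition C : fieldType := (complex Rdefinitions.R).

Definition comm {A : pzRingType} (x y : A) : A := x * y - y * x.

Definition alg_hom (A B : algType C) (f : A -> B) : Prop :=
  (forall (c : C) (x y : A), f (c *: x + y) = c *: f x + f y) /\
  (forall x y : A, f (x * y) = f x * f y) /\ f 1 = 1.

Definition yangian_rel (n : nat) (A : algType C)
    (t : nat -> 'I_n -> 'I_n -> A) : Prop :=
  (forall i j, t 0%N i j = (i == j)%:R) /\
  (forall (r s : nat) (i j k l : 'I_n),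
     comm (t r.+1 i j) (t s k l) - comm (t r i j) (t s.+1 k l)
     = t r k j * t s i l - t s k j * t r i l).

Definition prevt (n : nat) (A : algType C) (t : nat -> 'I_n -> 'I_n -> A)
    (r : nat) (i j : 'I_n) : A :=
  if r is r'.+1 then t r' i j else 0.

Definition oyangian_rel (n : nat) (a b : nat -> C) (A : algType C)
    (t : nat -> 'I_n -> 'I_n -> A) : Prop :=
  (forall i j, t 0%N i j = (i == j)%:R) /\
  (forall (r s : nat) (i j k l : 'I_n),
     comm (t r.+1 i j + a r *: t r i j + b r *: prevt t r i j) (t s k l)
     - comm (t r i j) (t s.+1 k l + a s *: t s k l + b s *: prevt t s k l)
     = t r k j * t s i l - t s k j * t r i l).

Definition presented_by (n : nat)
    (rel : forall B : algType C, (nat -> 'I_n -> 'I_n -> B) -> Prop)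
    (A : algType C) (t : nat -> 'I_n -> 'I_n -> A) : Prop :=
  rel A t /\
  forall (B : algType C) (f : nat -> 'I_n -> 'I_n -> B), rel B f ->
    (exists phi : A -> B, alg_hom phi /\
        forall r i j, phi (t r.+1 i j) = f r.+1 i j) /\
    (forall phi psi : A -> B, alg_hom phi -> alg_hom psi ->
        (forall r i j, phi (t r.+1 i j) = f r.+1 i j) ->
        (forall r i j, psi (t r.+1 i j) = f r.+1 i j) ->
        forall x, phi x = psi x).

(* The monic polynomials p_m: p_{-1} = 0, p_0 = 1,
   p_{m+1} = (x - a_m) p_m - b_m p_{m-1}.  opoly_pair m = (p_m, p_{m-1}). *)
Fixpoint opoly_pair (a b : nat -> C) (m : nat) : {poly C} * {poly C} :=
  match m with
  | 0%N => (1, 0)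
  | m'.+1 => let pr := opoly_pair a b m' in
             (('X - (a m')%:P) * pr.1 - b m' *: pr.2, pr.1)
  end.

Definition opoly (a b : nat -> C) (m : nat) : {poly C} := (opoly_pair a b m).1.

(* Formal contour integral (1/2 pi i) \oint P(z) T(z) dz/z = coefficient of z^0
   of P(z) * T(z), where P(z) = sum_m P_m z^m is a polynomial in z and
   T(z) = sum_s T_s z^{-s} is a formal series in z^{-1}. *)
Definition ct0 (A : algType C) (P : {poly C}) (T : nat -> A) : A :=
  \sum_(m < size P) P`_m *: T m.

(* Coefficient of u^l in K^{-1}(z,u) = sum_l u^l sum_{m<=l} q^l_m z^m, i.e.
   coefficient of u^{-l} in K^{-1}(z, 1/u): a polynomial in z. *)
Definition Kinv_coef (q : nat -> nat -> C) (l : nat) : {poly C} :=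
  \poly_(m < l.+1) q l m.

(* Main.v *)
Require Import Defs.
From HB Require Import structures.
From mathcomp Require Import all_boot all_order all_algebra.
Import GRing.Theory.
Local Open Scope ring_scope.

Lemma opoly_pair_coef (a b : nat -> C) (m : nat) :
  (forall k, (m < k)%N -> (opoly_pair a b m).1`_k = 0) /\
  (opoly_pair a b m).1`_m = 1 /\
  (forall k, (m <= k)%N -> (opoly_pair a b m).2`_k = 0).
Proof.
elim: m => [|m [IH1 [IH2 IH3]]].
  split; last split.
  - by move=> k hk; rewrite coef1; case: k hk.
  - by rewrite coef1.
  - by move=> k _; rewrite coef0.
split; last split.
- move=> k hk; rewrite coefB coefZ mulrBl coefB coefXM coefCM.
  case: k hk => [//|k] hk /=.
  rewrite IH1 // IH1 ?(ltn_trans (ltnSn m)) // IH3 ?(ltnW (ltnW hk)) //.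
  by rewrite ?mulr0 ?subr0 ?subrr.
- rewrite coefB coefZ mulrBl coefB coefXM coefCM /= IH2 IH1 // IH3 //.
  by rewrite ?mulr0 ?subr0.
- by move=> k hk; apply: IH1.
Qed.

Lemma opoly_high a b m k : (m < k)%N -> (opoly a b m)`_k = 0.
Proof. by case: (opoly_pair_coef a b m) => H _; apply: H. Qed.

Lemma opoly_lead a b m : (opoly a b m)`_m = 1.
Proof. by case: (opoly_pair_coef a b m) => _ [H _]. Qed.

Theorem mainTheorem2 (n : nat) (hn : (1 <= n)%N) (a b : nat -> C)
  (hb0 : b 0%N = 0) (hb : forall m, (1 <= m)%N -> b m != 0)
  (Y : algType C) (t : nat -> 'I_n -> 'I_n -> Y)
  (hY : presented_by (@yangian_rel n) t)
  (OY : algType C) (tt : nat -> 'I_n -> 'I_n -> OY)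
  (hOY : presented_by (@oyangian_rel n a b) tt)
  (W : OY -> Y) (hW : alg_hom W)
  (hWt : forall (r : nat) (i j : 'I_n), (1 <= r)%N ->
     W (tt r i j) = t r i j + \sum_(l < r) (opoly a b r)`_l *: t l i j)
  (Winv : Y -> OY) (hWK : cancel W Winv) (hWinvK : cancel Winv W)
  (q : nat -> nat -> C)
  (hq : forall r : nat, 'X^r = \sum_(l < r.+1) q r l *: opoly a b l) :
  (forall (r : nat) (i j : 'I_n), (1 <= r)%N ->
     Winv (t r i j) = tt r i j + \sum_(l < r) q r l *: tt l i j) /\
  (forall (i j : 'I_n) (r : nat),
     Winv (t r i j) = ct0 (Kinv_coef q r) (fun s => tt s i j)).
Proof.
case: hW => [hlin [hmul h1]].
have W0 : W 0 = 0.
  have := hlin 1 0 0; rewrite !scale1r addr0 => H.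
  by apply: (addrI (W 0)); rewrite addr0 -H.
have WD : forall x y, W (x + y) = W x + W y.
  by move=> x y; have := hlin 1 x y; rewrite !scale1r.
have WZ : forall c x, W (c *: x) = c *: W x.
  by move=> c x; rewrite -[c *: x]addr0 hlin W0 addr0.
have Wsum : forall (I : Type) (s : seq I) (F : I -> OY),
    W (\sum_(i <- s) F i) = \sum_(i <- s) W (F i).
  by move=> I s F; apply: (big_morph W WD W0).
have ht0 : forall i j, t 0%N i j = (i == j)%:R by case: hY => [[]].
have htt0 : forall i j, tt 0%N i j = (i == j)%:R by case: hOY => [[]].
have Wtt : forall r i j,
    W (tt r i j) = \sum_(l < r.+1) (opoly a b r)`_l *: t l i j.
  move=> [|r] i j.
    rewrite big_ord1 (opoly_lead a b 0) scale1r htt0 ht0.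
    by case: (i == j); rewrite ?h1 // W0.
  by rewrite hWt // [RHS]big_ord_recr (opoly_lead a b r.+1) scale1r addrC.
have qrr : forall r, q r r = 1.
  move=> r.
  have H : ('X^r : {poly C})`_r = (\sum_(l < r.+1) q r l *: opoly a b l)`_r.
    by rewrite -hq.
  move: H; rewrite coefXn eqxx coef_sum big_ord_recr coefZ (opoly_lead a b r) mulr1.
  rewrite big1; first by move=> H; rewrite -[RHS]/(true%:R) H /= add0r.
  move=> l _; rewrite coefZ opoly_high ?mulr0 //; exact: ltn_ord l.
have key : forall r i j, Winv (t r i j) = \sum_(l < r.+1) q r l *: tt l i j.
  move=> r i j; suff H : W (\sum_(l < r.+1) q r l *: tt l i j) = t r i j by rewrite -H hWK.
  rewrite Wsum.
  transitivity (\sum_(l < r.+1) q r l *: \sum_(k < r.+1) (opoly a b l)`_k *: t k i j).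
    apply: eq_bigr => l _; rewrite WZ Wtt; congr (_ *: _).
    rewrite (big_ord_widen r.+1 (fun k => (opoly a b l)`_k *: t k i j)) ?ltn_ord //.
    rewrite big_mkcond /=; apply: eq_bigr => k _.
    case: ifP => // /negbT; rewrite -leqNgt => hk.
    by rewrite opoly_high ?scale0r.
  under eq_bigr do rewrite scaler_sumr.
  rewrite exchange_big /=.
  transitivity (\sum_(k < r.+1) ('X^r : {poly C})`_k *: t k i j).
    apply: eq_bigr => k _; rewrite hq coef_sum scaler_suml.
    by apply: eq_bigr => l _; rewrite coefZ scalerA.
  rewrite big_ord_recr (coefXn C r ord_max) eqxx scale1r big1; first by rewrite /= add0r.
  move=> k _.
  rewrite coefXn ltn_eqF; last exact: ltn_ord k.
  by rewrite mulr0n scale0r.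
split.
  move=> r i j _; rewrite key big_ord_recr /= qrr scale1r addrC //.
move=> i j r; rewrite key /ct0 /Kinv_coef.
have hs : (size (\poly_(m < r.+1) q r m) <= r.+1)%N by apply: size_poly.
rewrite (big_ord_widen r.+1 (fun m => (\poly_(m < r.+1) q r m)`_m *: tt m i j) hs).
rewrite [RHS]big_mkcond; apply: eq_bigr => k _.
case: ifP => [_|/negbT]; first by rewrite coef_poly ltn_ord.
rewrite -leqNgt => hk.
have E : (\poly_(m < r.+1) q r m)`_k = q r k by rewrite coef_poly ltn_ord.
by rewrite -E nth_default // scale0r.
Qed.
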